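(* For every odd prime $p$, $$\sum_{\substack{k_1,k_2,k_3,k_4 = 0\\ k_1+k_2+k_3+k_4 = p-1}}^{\frac{p-1}{2}} \left[\prod_{i=1}^4 (k_i+1)_{\frac{p-1}{2}}^2\right]\left(H_{\frac{p-1}{2}+k_4} - H_{k_4}\right) \equiv 0 \pmod{p}.$$
   Context: $(a)_n = a(a+1)\cdots(a+n-1)$ is the rising factorial with $(a)_0 = 1$; $H_n = \sum_{j=1}^n \frac1j$ with $H_0 = 0$. The sum runs over integers $0 \le k_i \le \frac{p-1}{2}$ with $\sum k_i = p-1$; the terms are $p$-integral rationals and the congruence is in $\mathbb{Z}_{(p)}$. *)

(* Defs.v *)
From mathcomp Require Import all_boot all_order all_algebra.
Set Implicit Arguments. Unset Strict Implicit. Unset Printing Implicit Defensive.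
Import Order.TTheory GRing.Theory Num.Theory.
Local Open Scope ring_scope.

Definition rising (a : rat) (n : nat) : rat := \prod_(i < n) (a + i%:R).

Definition harm (n : nat) : rat := \sum_(j < n) ((j.+1)%:R)^-1.

(* x ≡ 0 (mod p) in Z_(p): x is p-integral and p divides it, i.e. p divides
   the (reduced) numerator and not the denominator. *)
Definition cong0_Zp (p : nat) (x : rat) : Prop :=
  (p%:Z %| numq x)%Z /\ ~~ (p%:Z %| denq x)%Z.

(* Main.v *)
Require Import Defs.
From mathcomp Require Import all_boot all_order all_algebra.
From mathcomp Require Import ring zify.
Import Order.TTheory GRing.Theory Num.Theory.
Local Open Scope ring_scope.

Definition Zint (p : nat) (x : rat) :=
  exists (a : int) (b : nat), ~~ (p %| b)%N /\ x * b%:R = a%:~R.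
Definition Z0 (p : nat) (x : rat) :=
  exists (a : int) (b : nat), ~~ (p %| b)%N /\ x * b%:R = (p%:Z * a)%:~R.

Lemma ndvdM p b1 b2 : prime p -> ~~ (p %| b1)%N -> ~~ (p %| b2)%N -> ~~ (p %| b1 * b2)%N.
Proof. by move=> pp h1 h2; rewrite Euclid_dvdM // negb_or h1 h2. Qed.

Lemma ZintD p x y : prime p -> Zint p x -> Zint p y -> Zint p (x + y).
Proof.
move=> pp [a1 [b1 [n1 H1]]] [a2 [b2 [n2 H2]]].
exists (a1 * b2%:Z + a2 * b1%:Z), (b1 * b2)%N; split; first exact: ndvdM.
rewrite rmorphD !rmorphM /= -H1 -H2 ?natrM; ring.
Qed.

Lemma ZintM p x y : prime p -> Zint p x -> Zint p y -> Zint p (x * y).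
Proof.
move=> pp [a1 [b1 [n1 H1]]] [a2 [b2 [n2 H2]]].
exists (a1 * a2), (b1 * b2)%N; split; first exact: ndvdM.
rewrite !rmorphM /= -H1 -H2 ?natrM; ring.
Qed.

Lemma ZintN p x : Zint p x -> Zint p (- x).
Proof.
move=> [a1 [b1 [n1 H1]]]; exists (- a1), b1; split => //.
rewrite rmorphN /= -H1; ring.
Qed.

Lemma Zint_nat p (m : nat) : prime p -> Zint p m%:R.
Proof.
move=> pp; exists m%:Z, 1%N; split; first by rewrite dvdn1; apply/negP => /eqP h; move: pp; rewrite h.
by rewrite mulr1.
Qed.

Lemma Zint_inv p (j : nat) : (0 < j < p)%N -> Zint p (j%:R^-1).
Proof.
move=> /andP [j0 jp]; exists 1, j; split.
  by apply/negP => /(dvdn_leq j0); rewrite leqNgt jp.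
by rewrite mulVf // pnatr_eq0 -lt0n.
Qed.

Lemma Z0_Zint p x : prime p -> Z0 p x -> Zint p x.
Proof. move=> pp [a [b [n H]]]; by exists (p%:Z * a), b. Qed.

Lemma Z0D p x y : prime p -> Z0 p x -> Z0 p y -> Z0 p (x + y).
Proof.
move=> pp [a1 [b1 [n1 H1]]] [a2 [b2 [n2 H2]]].
exists (a1 * b2%:Z + a2 * b1%:Z), (b1 * b2)%N; split; first exact: ndvdM.
have -> : ((p%:Z * (a1 * b2%:Z + a2 * b1%:Z))%:~R : rat)
   = (p%:Z * a1)%:~R * b2%:R + (p%:Z * a2)%:~R * b1%:R.
  by rewrite !(rmorphD, rmorphM) /=; ring.
rewrite -H1 -H2 ?natrM; ring.
Qed.

Lemma Z0M p x y : prime p -> Z0 p x -> Zint p y -> Z0 p (x * y).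
Proof.
move=> pp [a1 [b1 [n1 H1]]] [a2 [b2 [n2 H2]]].
exists (a1 * a2), (b1 * b2)%N; split; first exact: ndvdM.
have -> : ((p%:Z * (a1 * a2))%:~R : rat) = (p%:Z * a1)%:~R * a2%:~R.
  by rewrite !rmorphM /=; ring.
rewrite -H1 -H2 ?natrM; ring.
Qed.

Lemma Z0N p x : Z0 p x -> Z0 p (- x).
Proof.
move=> [a1 [b1 [n1 H1]]]; exists (- a1), b1; split => //.
have -> : ((p%:Z * - a1)%:~R : rat) = - (p%:Z * a1)%:~R by rewrite !rmorphM !rmorphN /=; ring.
rewrite -H1; ring.
Qed.

Lemma Z0B p x y : prime p -> Z0 p x -> Z0 p y -> Z0 p (x - y).
Proof. by move=> pp hx hy; apply: Z0D => //; apply: Z0N. Qed.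

Lemma Z0_p p y : prime p -> Zint p y -> Z0 p (p%:R * y).
Proof.
move=> pp [a [b [n H]]]; exists a, b; split => //.
by rewrite -mulrA H rmorphM /=.
Qed.

Lemma Z0_half p x : prime p -> odd p -> Z0 p (x + x) -> Z0 p x.
Proof.
move=> pp po [a [b [n H]]]; exists a, (2 * b)%N; split.
  apply: ndvdM => //; have h2 := prime_gt1 pp; apply/negP => /dvdn_leq hle.
  have e : p = 2%N by lia.
  by rewrite e in po.
by rewrite -H ?natrM; ring.
Qed.

Lemma Z0_cong p x : prime p -> Z0 p x -> cong0_Zp p x.
Proof.
move=> pp [a [b [n H]]].
have E : numq x * b%:Z = p%:Z * a * denq x.
  apply: (@intr_inj rat). rewrite !rmorphM /= numqE.
  have Hb : (b%:Z)%:~R = b%:R :> rat by [].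
  rewrite Hb.
  have -> : x * (denq x)%:~R * b%:R = (x * b%:R) * (denq x)%:~R by ring.
  by rewrite H rmorphM.
have cop : coprime p b by rewrite prime_coprime.
split.
  rewrite dvdzE absz_nat -(Gauss_dvdl _ cop) -[X in (_ * X)%N](absz_nat b) -abszM E !abszM absz_nat.
  by rewrite -mulnA dvdn_mulr.
rewrite dvdzE; apply/negP => hd.
have : (`|denq x| %| `|numq x| * b)%N by rewrite -[X in (_ * X)%N](absz_nat b) -abszM E abszM dvdn_mull.
rewrite Gauss_dvdr; last by rewrite coprime_sym coprime_num_den.
move=> hb; move: n; rewrite (dvdn_trans hd hb) //.
Qed.

Lemma ndvd_small p j : (0 < j < p)%N -> ~~ (p %| j)%N.
Proof. move=> /andP [j0 jp]; apply/negP => /(dvdn_leq j0); rewrite leqNgt jp //. Qed.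

Lemma Z0_0 p : prime p -> Z0 p 0.
Proof.
move=> pp; exists 0, 1%N; split; last by rewrite mul0r mulr0.
by rewrite dvdn1; apply/eqP => h; rewrite h in pp.
Qed.

Lemma Zint1 p : prime p -> Zint p 1.
Proof. by move=> pp; have := Zint_nat p 1 pp; rewrite mulr1n. Qed.
Lemma Zint0 p : prime p -> Zint p 0.
Proof. by move=> pp; have := Zint_nat p 0 pp; rewrite mulr0n. Qed.

Lemma Zint_rising p k n : prime p -> Zint p (rising (k.+1)%:R n).
Proof.
move=> pp; rewrite /rising; apply: (big_ind (Zint p)).
- exact: Zint1 pp.
- by move=> x y; apply: ZintM.
- by move=> i _; rewrite -natrD; apply: Zint_nat.
Qed.

Lemma A_refl p n k : prime p -> p = (n + n + 1)%N -> (k <= n)%N ->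
  Z0 p (rising ((n - k).+1)%:R n ^+ 2 - rising (k.+1)%:R n ^+ 2).
Proof.
move=> pp hp kn; rewrite /rising (reindex_inj rev_ord_inj) /= -!prodrXl.
pose K := fun a b => Zint p a /\ Zint p b /\ Z0 p (a - b).
suff : K (\prod_(j < n) ((n - k).+1%:R + (rev_ord j)%:R) ^+ 2)
         (\prod_(i < n) ((k.+1)%:R + i%:R) ^+ 2) by case=> _ [].
apply: (big_ind2 K).
- by split; [exact: Zint1 pp | split; [exact: Zint1 pp|rewrite subrr; exact: Z0_0 pp]].
- move=> a1 b1 a2 b2 [ha1 [hb1 hd1]] [ha2 [hb2 hd2]]; split; first exact: ZintM.
  split; first exact: ZintM.
  have -> : a1 * a2 - b1 * b2 = (a1 - b1) * a2 + (a2 - b2) * b1 by ring.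
  by apply: Z0D => //; apply: Z0M.
- move=> i _ /=.
  have e : ((n - k).+1 + (n - i.+1) = p - (k.+1 + i))%N by have := ltn_ord i; lia.
  rewrite -!natrD e !expr2 natrB; last by have := ltn_ord i; lia.
  split; first by rewrite -natrB; [apply: ZintM => //; apply: Zint_nat|have := ltn_ord i; lia].
  split; first by apply: ZintM => //; apply: Zint_nat.
  set y := (k.+1 + i)%N.
  have -> : (p%:R - y%:R) * (p%:R - y%:R) - y%:R * y%:R = p%:R * (p%:R - y%:R - y%:R) :> rat by ring.
  apply: Z0_p => //; apply: ZintD => //; last exact/ZintN/Zint_nat.
  by apply: ZintD => //; [exact: Zint_nat | exact/ZintN/Zint_nat].
Qed.

Lemma harmD n k : harm (n + k) - harm k = \sum_(i < n) ((k + i).+1)%:R^-1.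
Proof.
by rewrite /harm addnC big_split_ord /= [X in X - _]addrC addrK.
Qed.

Lemma Zint_D p n k : prime p -> p = (n + n + 1)%N -> (k <= n)%N ->
  Zint p (harm (n + k) - harm k).
Proof.
move=> pp hp kn; rewrite harmD; apply: (big_ind (Zint p)).
- exact: Zint0 pp.
- by move=> x y; apply: ZintD.
- move=> i _; apply: Zint_inv; have := ltn_ord i; lia.
Qed.

Lemma D_refl p n k : prime p -> p = (n + n + 1)%N -> (k <= n)%N ->
  Z0 p ((harm (n + (n - k)) - harm (n - k)) + (harm (n + k) - harm k)).
Proof.
move=> pp hp kn; rewrite !harmD (reindex_inj rev_ord_inj) /= -big_split /=.
apply: (big_ind (Z0 p)); first exact: Z0_0 pp.
  by move=> x y; apply: Z0D.
move=> i _; have hi := ltn_ord i.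
have e : ((n - k + (n - i.+1)).+1 = p - (k + i).+1)%N by lia.
rewrite e; set y := (k + i).+1.
exists 1, (y * (p - y))%N; split.
  by apply: ndvdM => //; apply: ndvd_small; lia.
have y0 : y%:R != 0 :> rat by rewrite pnatr_eq0; lia.
have py0 : (p - y)%:R != 0 :> rat by rewrite pnatr_eq0; lia.
rewrite natrM mulr1 mulrDl.
have -> : (p - y)%:R^-1 * (y%:R * (p - y)%:R) = y%:R :> rat by field.
have -> : y%:R^-1 * (y%:R * (p - y)%:R) = (p - y)%:R :> rat by field.
rewrite -natrD; congr (_%:R); lia.
Qed.

Lemma sum4_pair n (G : nat -> nat -> nat -> nat -> rat) (P : nat -> nat -> nat -> nat -> bool) :
  (forall k1 k2 k3 k4, (k1 <= n)%N -> (k2 <= n)%N -> (k3 <= n)%N -> (k4 <= n)%N ->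
     P (n - k1)%N (n - k2)%N (n - k3)%N (n - k4)%N = P k1 k2 k3 k4) ->
  \sum_(k1 < n.+1) \sum_(k2 < n.+1) \sum_(k3 < n.+1)
            \sum_(k4 < n.+1 | P k1 k2 k3 k4) G k1 k2 k3 k4 +
  \sum_(k1 < n.+1) \sum_(k2 < n.+1) \sum_(k3 < n.+1)
            \sum_(k4 < n.+1 | P k1 k2 k3 k4) G k1 k2 k3 k4 = \sum_(k1 < n.+1) \sum_(k2 < n.+1) \sum_(k3 < n.+1)
            \sum_(k4 < n.+1 | P k1 k2 k3 k4)
              (G k1 k2 k3 k4 + G (n - k1)%N (n - k2)%N (n - k3)%N (n - k4)%N).
Proof.
move=> HP.
have l (i : 'I_n.+1) : (i <= n)%N by rewrite -ltnS.
rewrite [X in _ + X = _](reindex_inj rev_ord_inj) /= -big_split; apply: eq_bigr => k1 _.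
rewrite [X in _ + X = _](reindex_inj rev_ord_inj) /= -big_split; apply: eq_bigr => k2 _.
rewrite [X in _ + X = _](reindex_inj rev_ord_inj) /= -big_split; apply: eq_bigr => k3 _.
rewrite [X in _ + X = _](reindex_inj rev_ord_inj) /=.
rewrite [X in _ + X = _](eq_bigl (fun k4 : 'I_n.+1 => P k1 k2 k3 k4)); last first.
  by move=> k4 /=; rewrite !subSS HP ?l.
rewrite -big_split; apply: eq_bigr => k4 _ /=.
by rewrite !subSS.
Qed.

Definition Keq p (a b : rat) := Zint p a /\ Zint p b /\ Z0 p (a - b).

Lemma KeqM p a b c d : prime p -> Keq p a b -> Keq p c d -> Keq p (a * c) (b * d).
Proof.
move=> pp [ha [hb hd1]] [hc [hd hd2]]; split; first exact: ZintM.
split; first exact: ZintM.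
have -> : a * c - b * d = (a - b) * c + (c - d) * b by ring.
by apply: Z0D => //; apply: Z0M.
Qed.

Lemma main_gen p n (A D : nat -> rat) : prime p -> odd p -> p = (n + n + 1)%N ->
  (forall k, (k <= n)%N -> Zint p (A k)) ->
  (forall k, (k <= n)%N -> Z0 p (A (n - k)%N - A k)) ->
  (forall k, (k <= n)%N -> Zint p (D k)) ->
  (forall k, (k <= n)%N -> Z0 p (D (n - k)%N + D k)) ->
  Z0 p (\sum_(k1 < n.+1) \sum_(k2 < n.+1) \sum_(k3 < n.+1)
          \sum_(k4 < n.+1 | (k1 + k2 + k3 + k4 == n + n)%N)
            ((A k1 * A k2 * A k3 * A k4) * D k4)).
Proof.
move=> pp po hp hA hA' hD hD'.
apply: Z0_half => //.
rewrite (@sum4_pair n (fun k1 k2 k3 k4 => (A k1 * A k2 * A k3 * A k4) * D k4)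
                   (fun k1 k2 k3 k4 => (k1 + k2 + k3 + k4 == n + n)%N)); last first.
  by move=> k1 k2 k3 k4 l1 l2 l3 l4 /=; apply/eqP/eqP; lia.
have l (i : 'I_n.+1) : (i <= n)%N by rewrite -ltnS.
do 3! (apply: (big_ind (Z0 p)); [exact: Z0_0 pp | by move=> x y; apply: Z0D | move=> ? _]).
apply: (big_ind (Z0 p)); [exact: Z0_0 pp | by move=> x y; apply: Z0D | move=> k4 _] => /=.
set a := A _ * A _ * A _ * A _.
set b := A _ * A _ * A _ * A _.
have K : forall k : 'I_n.+1, Keq p (A (n - k)%N) (A k).
  move=> k; split; last split; [ | exact: hA | exact: hA'].
  by have := hA' k (l k); move/(@Z0_Zint p _ pp)/(@ZintD p _ _ pp (hA k (l k))); rewrite addrC subrK.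
have Kab : Keq p b a by do 3! apply: KeqM => //.
case: Kab => [hb [ha hba]].
have -> : a * D k4 + b * D (n - k4)%N = a * (D (n - k4)%N + D k4) + (b - a) * D (n - k4)%N by ring.
apply: Z0D => //; first by rewrite mulrC; apply: Z0M => //; apply: hD'.
apply: Z0M => //; apply: hD; lia.
Qed.

Theorem lemma2p10 (p : nat) (hp : prime p) (hodd : odd p) :
  cong0_Zp p
    (\sum_(k1 < (p.-1./2).+1) \sum_(k2 < (p.-1./2).+1)
     \sum_(k3 < (p.-1./2).+1) \sum_(k4 < (p.-1./2).+1
        | (k1 + k2 + k3 + k4 == p.-1)%N)
       ((rising (k1.+1)%:R p.-1./2) ^+ 2 * (rising (k2.+1)%:R p.-1./2) ^+ 2
        * (rising (k3.+1)%:R p.-1./2) ^+ 2 * (rising (k4.+1)%:R p.-1./2) ^+ 2)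
       * (harm (p.-1./2 + k4) - harm k4)).
Proof.
apply: Z0_cong => //.
set n := p.-1./2.
have hpn : p = (n + n + 1)%N.
  have h := odd_double_half p; rewrite hodd in h.
  have e1 : p.-1 = p./2.*2 by rewrite -{1}h add1n.
  rewrite /n e1 doubleK; rewrite -addnn in h; lia.
have e : p.-1 = (n + n)%N by lia.
rewrite e.
apply: (@main_gen p n (fun k => rising (k.+1)%:R n ^+ 2) (fun k => harm (n + k) - harm k)) => //.
- by move=> k _; rewrite expr2; apply: ZintM => //; apply: Zint_rising.
- by move=> k kn; apply: A_refl.
- by move=> k kn; apply: Zint_D.
- by move=> k kn; apply: D_refl.
Qed.
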